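(* Let $R$ be a commutative semiring, $v:R\to M$ a surjective m-valuation with support $\mathfrak q:=v^{-1}(0)$, and $U^0(v)$ the supertropical monoid constructed below. (i) The map $\varphi_v^0:R\to U^0(v)$ with $\varphi_v^0(a)=a$ for $a\in R\setminus\mathfrak q$ and $\varphi_v^0(a)=0_M$ for $a\in\mathfrak q$ is a surjective m-supervaluation covering $v$. (ii) $\varphi_v^0$ dominates every other m-supervaluation covering $v$.
   Context: A bipotent semiring $M$ is a commutative monoid with absorbing $0$ and a total order compatible with multiplication with $0$ least; $x+y=\max(x,y)$. An m-valuation on a semiring $R$ is a multiplicative map $v:R\to M$ to a bipotent semiring with $v(0)=0$, $v(1)=1$, $v(a+b)\le\max(v(a),v(b))$. A supertropical monoid is a commutative monoid $U$ with absorbing $0$ and idempotent $e$ with $ex=0\Rightarrow x=0$ and a total order on $eU$ making it a bipotent semiring. An m-supervaluation is a map $\varphi:R\to U$ to a supertropical monoid with $\varphi(0)=0$, $\varphi(1)=1$, $\varphi(ab)=\varphi(a)\varphi(b)$, $e\varphi(a+b)\le\max(e\varphi(a),e\varphi(b))$; it covers $v$ if $eU=M$ and $e\varphi=v$; it is surjective if $U=\varphi(R)\cup e\varphi(R)$. For m-supervaluations $\varphi:R\to U$, $\psi:R\to V$, $\varphi$ dominates $\psi$ if for all $a,b\in R$: $\varphi(a)=\varphi(b)\Rightarrow\psi(a)=\psi(b)$; $e\varphi(a)\le e\varphi(b)\Rightarrow e\psi(a)\le e\psi(b)$; $\varphi(a)\in eU\Rightarrow\psi(a)\in eV$. Construction: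 $U^0(v)$ is the disjoint union $(R\setminus\mathfrak q)\sqcup M$ with multiplication $x\odot y=xy$ (product in $R$) if $x,y,xy\in R\setminus\mathfrak q$; $x\odot y=0_M$ if $x,y\in R\setminus\mathfrak q$, $xy\in\mathfrak q$; $x\odot y=v(x)y$ if $x\in R\setminus\mathfrak q$, $y\in M$ (and symmetrically); $x\odot y=xy$ (product in $M$) if $x,y\in M$; unit $1_R$, absorbing element $0_M$, distinguished idempotent $e:=1_M$, with the given ordering on $eU^0(v)=M$. *)

(* Defs.v *)
From HB Require Import structures.
From mathcomp Require Import all_boot all_order all_algebra.
Set Implicit Arguments. Unset Strict Implicit. Unset Printing Implicit Defensive.
Import GRing.Theory.
Local Open Scope ring_scope.

(** * Bipotent semirings (given as totally ordered commutative monoids with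
    absorbing least element 0; addition is x + y = max x y). *)
Record bip_data := BipData {
  Mcar : eqType;
  Mmul : Mcar -> Mcar -> Mcar;
  Mone : Mcar;
  Mzero : Mcar;
  Mle : Mcar -> Mcar -> bool }.

Definition Mmax (M : bip_data) (x y : Mcar M) : Mcar M :=
  if Mle x y then y else x.

Definition is_bipotent (M : bip_data) : Prop :=
  (forall x y z : Mcar M, Mmul x (Mmul y z) = Mmul (Mmul x y) z) /\
  (forall x y : Mcar M, Mmul x y = Mmul y x) /\
  (forall x : Mcar M, Mmul (Mone M) x = x) /\
  (forall x : Mcar M, Mmul (Mzero M) x = Mzero M) /\
  (forall x : Mcar M, Mle x x) /\
  (forall x y : Mcar M, Mle x y -> Mle y x -> x = y) /\
  (forall x y z : Mcar M, Mle x y -> Mle y z -> Mle x z) /\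
  (forall x y : Mcar M, Mle x y || Mle y x) /\
  (forall x y z : Mcar M, Mle x y -> Mle (Mmul x z) (Mmul y z)) /\
  (forall x : Mcar M, Mle (Mzero M) x).

Definition is_mvaluation (R : comPzSemiRingType) (M : bip_data) (v : R -> Mcar M)
  : Prop :=
  v 0 = Mzero M /\ v 1 = Mone M /\
  (forall a b : R, v (a * b) = Mmul (v a) (v b)) /\
  (forall a b : R, Mle (v (a + b)) (Mmax (v a) (v b))).

Definition surjective_val (R : comPzSemiRingType) (M : bip_data) (v : R -> Mcar M)
  : Prop := forall m : Mcar M, exists a : R, v a = m.

Record st_data := StData {
  Ucar : Type;
  Umul : Ucar -> Ucar -> Ucar;
  Uone : Ucar;
  Uzero : Ucar;
  Ue : Ucar;
  Ule : Ucar -> Ucar -> bool }.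

Definition inGhost (U : st_data) (x : Ucar U) : Prop := exists y, x = Umul (Ue U) y.

Definition Umax (U : st_data) (x y : Ucar U) : Ucar U :=
  if Ule x y then y else x.

Definition is_supertropical (U : st_data) : Prop :=
  (forall x y z : Ucar U, Umul x (Umul y z) = Umul (Umul x y) z) /\
  (forall x y : Ucar U, Umul x y = Umul y x) /\
  (forall x : Ucar U, Umul (Uone U) x = x) /\
  (forall x : Ucar U, Umul (Uzero U) x = Uzero U) /\
  Umul (Ue U) (Ue U) = Ue U /\
  (forall x : Ucar U, Umul (Ue U) x = Uzero U -> x = Uzero U) /\
  (forall x : Ucar U, inGhost x -> Ule x x) /\
  (forall x y : Ucar U, inGhost x -> inGhost y -> Ule x y -> Ule y x -> x = y) /\
  (forall x y z : Ucar U, inGhost x -> inGhost y -> inGhost z ->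
     Ule x y -> Ule y z -> Ule x z) /\
  (forall x y : Ucar U, inGhost x -> inGhost y -> Ule x y || Ule y x) /\
  (forall x y z : Ucar U, inGhost x -> inGhost y -> inGhost z ->
     Ule x y -> Ule (Umul x z) (Umul y z)) /\
  (forall x : Ucar U, inGhost x -> Ule (Uzero U) x).

Definition is_msupervaluation (R : comPzSemiRingType) (U : st_data)
  (phi : R -> Ucar U) : Prop :=
  phi 0 = Uzero U /\ phi 1 = Uone U /\
  (forall a b : R, phi (a * b) = Umul (phi a) (phi b)) /\
  (forall a b : R, Ule (Umul (Ue U) (phi (a + b)))
                       (Umax (Umul (Ue U) (phi a)) (Umul (Ue U) (phi b)))).

Definition surjective_sv (R : comPzSemiRingType) (U : st_data) (phi : R -> Ucar U)
  : Prop := forall x : Ucar U, exists a : R, x = phi a \/ x = Umul (Ue U) (phi a).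

(** phi covers v: eU = M (as bipotent semirings, via an identification iota
    of M with eU), and e phi = v. *)
Definition covers (R : comPzSemiRingType) (U : st_data) (M : bip_data)
  (phi : R -> Ucar U) (v : R -> Mcar M) : Prop :=
  exists iota : Mcar M -> Ucar U,
    injective iota /\
    (forall x : Ucar U, inGhost x <-> exists m, x = iota m) /\
    (forall m n, iota (Mmul m n) = Umul (iota m) (iota n)) /\
    iota (Mone M) = Ue U /\ iota (Mzero M) = Uzero U /\
    (forall m n, Mle m n = Ule (iota m) (iota n)) /\
    (forall a : R, Umul (Ue U) (phi a) = iota (v a)).

Definition dominates (R : comPzSemiRingType) (U V : st_data)
  (phi : R -> Ucar U) (psi : R -> Ucar V) : Prop :=
  forall a b : R,
    (phi a = phi b -> psi a = psi b) /\
    (Ule (Umul (Ue U) (phi a)) (Umul (Ue U) (phi b)) ->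
       Ule (Umul (Ue V) (psi a)) (Umul (Ue V) (psi b))) /\
    (inGhost (phi a) -> inGhost (psi a)).

Section U0.
Variables (R : comPzSemiRingType) (M : bip_data) (v : R -> Mcar M).

Definition nonsupp := {a : R | v a != Mzero M}.

Definition U0car : Type := (nonsupp + Mcar M)%type.

Definition phi0 (a : R) : U0car :=
  match @insub R (fun a => v a != Mzero M) nonsupp a with
  | Some s => inl s
  | None => inr (Mzero M)
  end.

Definition U0mul (x y : U0car) : U0car :=
  match x, y with
  | inl a, inl b => phi0 (val a * val b)
  | inl a, inr m => inr (Mmul (v (val a)) m)
  | inr m, inl b => inr (Mmul m (v (val b)))
  | inr m, inr n => inr (Mmul m n)
  end.

Definition U0le (x y : U0car) : bool :=
  match x, y with
  | inr m, inr n => Mle m n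
  | _, _ => false
  end.

Definition U0 : st_data :=
  StData U0mul (phi0 1) (inr (Mzero M)) (inr (Mone M)) U0le.

End U0.

(* Main.v *)
Require Import Defs.
From mathcomp Require Import all_boot all_order all_algebra.
Local Open Scope ring_scope.
Import GRing.Theory.

Lemma phi0_nz {R : comPzSemiRingType} {M : bip_data} {v : R -> Mcar M} a
  (h : v a != Mzero M) : phi0 v a = inl (exist _ a h).
Proof. by rewrite /phi0 insubT. Qed.

Lemma phi0_z {R : comPzSemiRingType} {M : bip_data} {v : R -> Mcar M} a
  (h : v a = Mzero M) : phi0 v a = inr (Mzero M).
Proof. by rewrite /phi0 insubF // h eqxx. Qed.

Theorem theorem6p4 (R : comPzSemiRingType) (M : bip_data) (v : R -> Mcar M)
  (hM : is_bipotent M) (hv : is_mvaluation v) (hsurj : surjective_val v) :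
  (is_supertropical (U0 v) /\
   is_msupervaluation (U:=U0 v) (phi0 v) /\
   surjective_sv (U:=U0 v) (phi0 v) /\
   covers (U:=U0 v) (phi0 v) v) /\
  (forall (V : st_data) (psi : R -> Ucar V),
     is_supertropical V -> is_msupervaluation psi -> covers psi v ->
     dominates (U:=U0 v) (phi0 v) psi).
Proof.
have [mA [mC [m1 [m0 [lr [las [ltr [ltot [lmon l0]]]]]]]]] := hM.
have [v0 [v1 [vM vD]]] := hv.
have mr0 : forall x, Mmul x (Mzero M) = Mzero M by move=> x; rewrite mC m0.
have mr1 : forall x, Mmul x (Mone M) = x by move=> x; rewrite mC m1.
have phiE : forall a, v a = Mzero M -> phi0 v a = inr (Mzero M) by move=> a; apply: phi0_z.
have phiS : forall s : nonsupp v, phi0 v (val s) = inl s.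
  by case=> a h; rewrite (phi0_nz _ h).
have ephi : forall a, @U0mul _ _ v (inr (Mone M)) (phi0 v a) = inr (v a).
  move=> a; case: (eqVneq (v a) (Mzero M)) => h.
    by rewrite phiE //= m1 h.
  by rewrite (phi0_nz _ h) /= m1.
have phi0M : forall a b, phi0 v (a * b) = @U0mul _ _ v (phi0 v a) (phi0 v b).
  move=> a b.
  case: (eqVneq (v a) (Mzero M)) => ha.
    rewrite (phiE a ha) phiE ?vM ?ha ?m0 //.
    case: (eqVneq (v b) (Mzero M)) => hb; first by rewrite (phiE b hb) /= m0.
    by rewrite (phi0_nz _ hb) /= m0.
  case: (eqVneq (v b) (Mzero M)) => hb.
    by rewrite (phiE b hb) (phi0_nz _ ha) /= phiE ?vM ?hb ?mr0.
  by rewrite (phi0_nz _ ha) (phi0_nz _ hb).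
have phisurj : forall x : U0car v, exists a, x = phi0 v a \/ x = @U0mul _ _ v (inr (Mone M)) (phi0 v a).
  case=> [s|m]; first by exists (val s); left; rewrite phiS.
  have [a ha] := hsurj m; exists a; right; by rewrite ephi ha.
have L1 : forall x n, @U0mul _ _ v (phi0 v x) (inr n) = inr (Mmul (v x) n).
  move=> x n; case: (eqVneq (v x) (Mzero M)) => h.
    by rewrite phiE //= h m0.
  by rewrite (phi0_nz _ h).
have L2 : forall x n, @U0mul _ _ v (inr n) (phi0 v x) = inr (Mmul n (v x)).
  move=> x n; case: (eqVneq (v x) (Mzero M)) => h.
    by rewrite phiE //= h mr0.
  by rewrite (phi0_nz _ h).
have L3 : forall m n, @U0mul _ _ v (inr m) (inr n) = inr (Mmul m n) by [].
have one1 : forall x, @U0mul _ _ v (phi0 v 1) x = x.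
  case=> [s|m]; first by rewrite -phiS -phi0M mul1r.
  by rewrite L1 v1 m1.
have mulC : forall x y : U0car v, @U0mul _ _ v x y = @U0mul _ _ v y x.
  case=> [a|m] [b|n]; rewrite -?phiS -?phi0M ?L1 ?L2 ?L3 ?(mulrC (val a)) ?(mC m) ?(mC n) //.
have mulA : forall x y z : U0car v, @U0mul _ _ v x (@U0mul _ _ v y z) = @U0mul _ _ v (@U0mul _ _ v x y) z.
  case=> [a|m] [b|n] [c|p]; rewrite -?phiS;
  rewrite -?phi0M ?L1 ?L2 ?L3 -?phi0M ?L1 ?L2 ?L3 ?vM ?mA ?mulrA //.
have ghostE : forall x : U0car v, (exists y, x = @U0mul _ _ v (inr (Mone M)) y) <-> exists m, x = inr m.
  move=> x; split.
    by case=> y ->; case: y => [y|y] /=; eexists.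
  by case=> m ->; exists (inr m); rewrite /= m1.
have ephi' : forall a, @Umul (U0 v) (Ue (U0 v)) (phi0 v a) = inr (v a) := ephi.
split; first split.
- split; first exact: mulA.
  split; first exact: mulC.
  split; first exact: one1.
  split; first by case=> [b|n] /=; rewrite m0.
  split; first by rewrite /= m1.
  split.
    case=> [s|n] /=; last by rewrite m1.
    rewrite m1 => -[] h; have := valP s; by rewrite /= h eqxx.
  split; first by move=> x /ghostE [m ->] /=.
  split; first by move=> x y /ghostE [m ->] /ghostE [n ->] /= h1 h2; rewrite (las _ _ h1 h2).
  split; first by move=> x y z /ghostE [m ->] /ghostE [n ->] /ghostE [p ->] /=; apply: ltr.
  split; first by move=> x y /ghostE [m ->] /ghostE [n ->] /=.
  split; first by move=> x y z /ghostE [m ->] /ghostE [n ->] /ghostE [p ->] /=; apply: lmon.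
  by move=> x /ghostE [m ->] /=.
- split.
    split; first exact: phiE.
    split; first by [].
    split; first exact: phi0M.
    move=> a b; rewrite !ephi' /Umax /=.
    by have := vD a b; rewrite /Mmax; case: (Mle (v a) (v b)).
  split; first by move=> x; have [a [->|->]] := phisurj x; exists a; [left|right].
  exists inr; split; first by move=> m n [].
  split; first by move=> x; exact: ghostE.
  split; first by [].
  split; first by [].
  split; first by [].
  split; first by [].
  exact: ephi.
- move=> V psi hV hpsi [io [ioI [ioG [ioM [io1 [io0 [ioL ioE]]]]]]].
  have [_ [Vc [_ [V0 [_ [Ve0 _]]]]]] := hV.
  have psiz : forall a, v a = Mzero M -> psi a = Uzero V.
    by move=> a h; apply: Ve0; rewrite ioE h io0.
  have vz : forall a, (exists m, phi0 v a = inr m) -> v a = Mzero M.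
    move=> a [m]; case: (eqVneq (v a) (Mzero M)) => // h.
    by rewrite (phi0_nz _ h).
  move=> a b; split.
    case: (eqVneq (v a) (Mzero M)) => ha.
      rewrite (phiE a ha) => hb.
      by rewrite psiz // (psiz b) //; apply: vz; exists (Mzero M).
    rewrite (phi0_nz _ ha); case: (eqVneq (v b) (Mzero M)) => hb.
      by rewrite (phiE b hb).
    by rewrite (phi0_nz _ hb) => -[->].
  split.
    by rewrite !ephi' /= !ioE -ioL.
  move=> /ghostE h; rewrite (psiz a (vz a h)).
  by exists (Uzero V); rewrite Vc V0.
Qed.
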